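(* Let $T:\mathbf{Set}\to\mathbf{Set}$ be a functor and $\Lambda$ a strongly expressive set of monotone singleton-preserving predicate liftings for $T$. Let $(X,\xi)$ be a $T$-coalgebra and let $\lambda_1,\dots,\lambda_k$ be $k$-ary monotone singleton-preserving predicate liftings for $T$, each obtained from a member of $\Lambda$ by reordering, duplicating and/or adding dummy arguments. Let $(A_1,\dots,A_k)$ be the greatest fixed point (w.r.t. componentwise inclusion) of the monotone map $h:(\mathcal{P}X)^k\to(\mathcal{P}X)^k$, $$h(X_1,\dots,X_k)=\big(\xi^{-1}[\lambda_{1,X}(X_1,\dots,X_k)],\dots,\xi^{-1}[\lambda_{k,X}(X_1,\dots,X_k)]\big).$$ Then for each $i$, all elements of $A_i$ are behaviourally equivalent to each other, and for all $i,j$ either $A_i\cap A_j=\varnothing$ or $A_i=A_j$.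
   Context: An $n$-ary predicate lifting for $T$ is a family $\lambda_X:(\mathcal{P}X)^n\to\mathcal{P}(TX)$ natural w.r.t. preimages ($\lambda_X(f^{-1}[A_1],\dots,f^{-1}[A_n])=(Tf)^{-1}[\lambda_Y(A_1,\dots,A_n)]$); monotone if monotone in every argument; singleton-preserving if $|\lambda_X(\{x_1\},\dots,\{x_n\})|=1$ always. $\Lambda$ is strongly expressive if for every set $X$ and $t\in TX$ there exist $\lambda/n\in\Lambda$ and $x_i\in X$ with $\{t\}=\lambda_X(\{x_1\},\dots,\{x_n\})$. A $T$-coalgebra is $(X,\xi)$ with $\xi:X\to TX$; coalgebra morphisms $h$ satisfy $Th\circ\xi=\zeta\circ h$; two states are behaviourally equivalent if some pair of coalgebra morphisms into a common coalgebra identifies them. *)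

(* Defs.v *)
From mathcomp Require Import all_boot.
Set Implicit Arguments. Unset Strict Implicit. Unset Printing Implicit Defensive.

Section Defs.
Variable T : Type -> Type.
Variable fmap : forall X Y : Type, (X -> Y) -> T X -> T Y.

Definition is_functor : Prop :=
  (forall X (t : T X), fmap (fun x : X => x) t = t) /\
  (forall X Y Z (f : X -> Y) (g : Y -> Z) (t : T X),
      fmap (fun x => g (f x)) t = fmap g (fmap f t)).

Definition pred_lifting (n : nat) :=
  forall X : Type, ('I_n -> X -> Prop) -> T X -> Prop.

Definition natural_lifting n (lam : pred_lifting n) : Prop :=
  forall X Y (f : X -> Y) (A : 'I_n -> Y -> Prop) (t : T X),
    lam X (fun i x => A i (f x)) t <-> lam Y A (fmap f t).

Definition monotone_lifting n (lam : pred_lifting n) : Prop :=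
  forall X (A B : 'I_n -> X -> Prop),
    (forall i x, A i x -> B i x) -> forall t, lam X A t -> lam X B t.

Definition singleton_preserving n (lam : pred_lifting n) : Prop :=
  forall X (x : 'I_n -> X), exists t : T X,
    forall u, lam X (fun i y => y = x i) u <-> u = t.

(* a set Lambda of liftings, indexed by L, with arities ar *)
Definition strongly_expressive (L : Type) (ar : L -> nat)
  (lam : forall l, pred_lifting (ar l)) : Prop :=
  forall X (t : T X), exists (l : L) (x : 'I_(ar l) -> X),
    forall u, lam l X (fun i y => y = x i) u <-> u = t.

Definition coalg_morphism (X : Type) (xi : X -> T X) (Y : Type) (zeta : Y -> T Y)
  (h : X -> Y) : Prop :=
  forall x, fmap h (xi x) = zeta (h x).

Definition beh_equiv (X1 : Type) (xi1 : X1 -> T X1) (x1 : X1)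
  (X2 : Type) (xi2 : X2 -> T X2) (x2 : X2) : Prop :=
  exists (Z : Type) (zeta : Z -> T Z) (h1 : X1 -> Z) (h2 : X2 -> Z),
    coalg_morphism xi1 zeta h1 /\ coalg_morphism xi2 zeta h2 /\ h1 x1 = h2 x2.

End Defs.

(* the k-ary lifting obtained from lam by the reindexing s
   (reordering / duplicating / adding dummy arguments):
   (X_1..X_k) |-> lam (X_{s 1}, ..., X_{s n}) *)
Definition reindex_lifting (T : Type -> Type) (n k : nat) (lam : pred_lifting T n)
  (s : 'I_n -> 'I_k) : pred_lifting T k :=
  fun X S => lam X (fun m => S (s m)).

Definition hmap (T : Type -> Type) (k : nat) (lamk : 'I_k -> pred_lifting T k)
  (X : Type) (xi : X -> T X) (S : 'I_k -> X -> Prop) : 'I_k -> X -> Prop :=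
  fun j x => lamk j X S (xi x).

Definition is_gfp (X : Type) (k : nat) (F : ('I_k -> X -> Prop) -> 'I_k -> X -> Prop)
  (A : 'I_k -> X -> Prop) : Prop :=
  (forall j x, F A j x <-> A j x) /\
  (forall B : 'I_k -> X -> Prop, (forall j x, F B j x <-> B j x) ->
     forall j x, B j x -> A j x).

(* Main.v *)
From Stdlib Require Import Relations ClassicalEpsilon FunctionalExtensionality PropExtensionality ProofIrrelevance.
Require Import Defs.
From mathcomp Require Import all_boot.

Lemma tarski_le (X : Type) (k : nat)
  (F : ('I_k -> X -> Prop) -> 'I_k -> X -> Prop)
  (mono : forall S S', (forall j x, S j x -> S' j x) -> forall j x, F S j x -> F S' j x)
  (A : 'I_k -> X -> Prop) (HA : is_gfp F A)
  (P : 'I_k -> X -> Prop) (HP : forall j x, P j x -> F P j x) :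
  forall j x, P j x -> A j x.
Proof.
  set G := fun j x => exists Q : 'I_k -> X -> Prop,
             (forall j x, Q j x -> F Q j x) /\ Q j x.
  have GF : forall j x, G j x -> F G j x.
    move=> j x [Q [HQ Qx]]; apply: (mono Q) => //; last by apply: HQ.
    by move=> j' x' Qx'; exists Q.
  have FG : forall j x, F G j x -> G j x.
    move=> j x Fx; exists (F G); split => //.
    by move=> j' x'; apply: mono.
  move=> j x Px.
  apply: (proj2 HA G) => //; last by exists P.
  by move=> j' x'; split; [apply: FG | apply: GF].
Qed.

Lemma sig_eq_pi (U : Type) (Q : U -> Prop) (a b : U) (p : Q a) (q : Q b) :
  a = b -> exist Q a p = exist Q b q.
Proof. move=> E; subst; f_equal; apply: proof_irrelevance. Qed.

Theorem mainTheorem7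
  (T : Type -> Type) (fmap : forall X Y : Type, (X -> Y) -> T X -> T Y)
  (Hfun : is_functor fmap)
  (L : Type) (ar : L -> nat) (lam : forall l : L, pred_lifting T (ar l))
  (Hnat : forall l, natural_lifting fmap (lam l))
  (Hmon : forall l, monotone_lifting (lam l))
  (Hsing : forall l, singleton_preserving (lam l))
  (Hexp : strongly_expressive lam)
  (X : Type) (xi : X -> T X)
  (k : nat) (lk : 'I_k -> L) (s : forall j : 'I_k, 'I_(ar (lk j)) -> 'I_k)
  (A : 'I_k -> X -> Prop)
  (HA : is_gfp (hmap (fun j => reindex_lifting (lam (lk j)) (s j)) xi) A) :
  (forall i x y, A i x -> A i y -> beh_equiv fmap xi x xi y) /\
  (forall i j, (forall x, ~ (A i x /\ A j x)) \/ (forall x, A i x <-> A j x)).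
Proof.
  set F := hmap (fun j => reindex_lifting (lam (lk j)) (s j)) xi.
  have Fmono : forall S S', (forall j x, S j x -> S' j x) ->
      forall j x, F S j x -> F S' j x.
    move=> S S' HS j x; rewrite /F /hmap /reindex_lifting.
    apply: Hmon => m y; exact: HS.
  have Afix : forall i x, A i x -> lam (lk i) X (fun m => A (s i m)) (xi x).
    by move=> i x Ax; apply (proj1 HA i x).
  set E := fun r r' : X + 'I_k =>
    exists i x, r = inl x /\ r' = inr i /\ A i x.
  set crt := clos_refl_sym_trans _ E.
  set cls := fun r => fun r' => crt r r'.
  pose Z := {P : X + 'I_k -> Prop | exists r, P = cls r}.
  have cls_eq : forall r r', crt r r' -> cls r = cls r'.
    move=> r r' H; apply: functional_extensionality => r2.
    apply: propositional_extensionality; rewrite /cls; split => H2.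
    - apply: rst_trans (rst_sym _ _ _ _ H) H2.
    - apply: rst_trans H H2.
  set cl : X + 'I_k -> Z := fun r => exist _ (cls r) (ex_intro _ r erefl).
  set h : X -> Z := fun x => cl (inl x).
  set q : 'I_k -> Z := fun i => cl (inr i).
  have hq : forall i x, A i x -> h x = q i.
    move=> i x Ax; apply: sig_eq_pi; apply: cls_eq; apply: rst_step.
    by exists i, x.
  pose zeta i := proj1_sig (constructive_indefinite_description _ (Hsing (lk i) 'I_k (s i))).
  have zetaP : forall i u, lam (lk i) 'I_k (fun m y => y = s i m) u <-> u = zeta i.
    move=> i; exact: (proj2_sig (constructive_indefinite_description _ (Hsing (lk i) 'I_k (s i)))).
  set val := fun r : X + 'I_k => match r with
    | inl x => fmap _ _ h (xi x) | inr i => fmap _ _ q (zeta i) end.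
  have zetaZ : forall i, lam (lk i) Z (fun m z => z = q (s i m)) (fmap _ _ q (zeta i)).
    move=> i; apply (Hnat (lk i) _ _ q (fun m z => z = q (s i m))).
    apply: (Hmon _ _ (fun m y => y = s i m)); first by move=> m y ->.
    by apply/zetaP.
  have edge : forall i x, A i x -> val (inl x) = val (inr i).
    move=> i x Ax.
    have [t0 Ht0] := Hsing (lk i) Z (fun m => q (s i m)).
    rewrite /= (proj1 (Ht0 _) (zetaZ i)); apply/Ht0.
    apply (Hnat (lk i) _ _ h (fun m z => z = q (s i m))).
    apply: (Hmon _ _ (fun m => A (s i m))); last exact: Afix.
    by move=> m y Ay; apply: hq.
  have valc : forall r r', crt r r' -> val r = val r'.
    move=> r r'; elim.
    - by move=> a b [i [x [-> [-> Ax]]]]; apply: edge.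
    - by [].
    - by move=> a b _ ->.
    - by move=> a b c _ -> _ ->.
  pose om (P : Z) : T Z := val (proj1_sig (constructive_indefinite_description _ (proj2_sig P))).
  have omcl : forall r, om (cl r) = val r.
    move=> r; rewrite /om.
    case: (constructive_indefinite_description _ _) => r' /= Hr'.
    apply: valc.
    have H : cls r r by apply: rst_refl.
    rewrite Hr' in H; exact: H.
  have morph : coalg_morphism fmap xi om h.
    by move=> x; rewrite /h omcl.
  (* A_m = h^-1 (q m) *)
  set B := fun m y => h y = q m.
  have Bpost : forall j x, B j x -> F B j x.
    move=> j y By; rewrite /F /hmap /reindex_lifting.
    apply (Hnat (lk j) _ _ h (fun m z => z = q (s j m))).
    rewrite morph By /q omcl /=; exact: zetaZ.
  have BA : forall j x, B j x -> A j x := @tarski_le X k F Fmono A HA B Bpost.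
  split.
  - move=> i x y Ax Ay; exists Z, om, h, h; do 2!split => //.
    by rewrite (hq _ _ Ax) (hq _ _ Ay).
  - move=> i j.
    case: (classic (exists x, A i x /\ A j x)) => [[x [Ai Aj]]|N]; last first.
      by left => x H; apply: N; exists x.
    right => y; have Eij : q i = q j by rewrite -(hq _ _ Ai) (hq _ _ Aj).
    split => Ay; apply: BA; rewrite /B (hq _ _ Ay) //.
Qed.
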